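(* For all integers $0\le r\le n$, \[ \log s(n,r) \le \frac{1}{n-r+1}\binom{n}{r}\log(n-r+2). \]
   Context: $s(n,r)$ denotes the number of sparse paving matroids of rank $r$ on the ground set $[n]=\{1,\dots,n\}$. A matroid of rank $r$ is sparse paving if every $r$-subset of the ground set is either a basis or a circuit-hyperplane (equivalently, the matroid and its dual are both paving, where paving means every circuit has at least $r$ elements). $\log$ is the logarithm to base $2$. *)

(* Defs.v *)
From mathcomp Require Import all_boot.
From Stdlib Require Import Reals.

Set Implicit Arguments.
Unset Strict Implicit.
Unset Printing Implicit Defensive.

Definition is_matroid (n : nat) (B : {set {set 'I_n}}) : bool :=
  (B != set0) &&
  [forall B1 in B, forall B2 in B, forall x in B1 :\: B2,
     exists y in B2 :\: B1, y |: (B1 :\ x) \in B].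

Definition has_rank (n : nat) (B : {set {set 'I_n}}) (r : nat) : bool :=
  [forall b in B, #|b| == r].

Definition independent (n : nat) (B : {set {set 'I_n}}) (I : {set 'I_n}) : bool :=
  [exists b in B, I \subset b].

Definition circuit (n : nat) (B : {set {set 'I_n}}) (C : {set 'I_n}) : bool :=
  ~~ independent B C && [forall D : {set 'I_n}, (D \proper C) ==> independent B D].

Definition dual (n : nat) (B : {set {set 'I_n}}) : {set {set 'I_n}} :=
  [set ~: b | b in B].

Definition paving (n : nat) (B : {set {set 'I_n}}) (r : nat) : bool :=
  [forall C : {set 'I_n}, circuit B C ==> (r <= #|C|)].

Definition sparse_paving (n : nat) (B : {set {set 'I_n}}) (r : nat) : bool :=
  [&& is_matroid B, has_rank B r, paving B r & paving (dual B) (n - r)].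

Definition s (n r : nat) : nat :=
  #|[set B : {set {set 'I_n}} | sparse_paving B r]|.

Definition log2 (x : R) : R := (ln x / ln 2)%R.

(* Main.v *)
Require Import Defs.
From mathcomp Require Import all_boot all_order all_algebra zify.
Set Implicit Arguments.
Unset Strict Implicit.

Section KeyIneq.
Import Order.TTheory GRing.Theory Num.Theory.
Local Open Scope ring_scope.

Lemma helper (R : realFieldType) (x z al Q : R) (t : nat) :
  (0 < t)%N -> 0 <= x -> 0 <= z -> 0 <= al ->
  x ^+ t <= Q * al ^+ t -> Q < z ^+ t ->
  x <= z * al /\ (0 < al -> x < z * al).
Proof.
move=> t0 x0 z0 a0 hx hQ.
have [al0|alp] := eqVneq al 0.
  subst al. move: hx; rewrite expr0n (_ : (t == 0)%N = false) ?mulr0 => [hx|]; last by case: (t) t0.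
  have : x ^+ t == 0 by rewrite eq_le hx exprn_ge0.
  by rewrite expf_eq0 t0 /= => /eqP ->; split.
have ap : 0 < al by rewrite lt0r alp a0.
have lt : x < z * al.
  rewrite -(ltr_pXn2r t0) ?nnegrE ?mulr_ge0 //.
  apply: (le_lt_trans hx); rewrite exprMn ltr_pM2r //.
  by rewrite exprn_gt0.
by split=> //; apply: ltW.
Qed.

Lemma key (R : realFieldType) (I : finType) (J : {pred I}) (a b : I -> R)
  (M x y : R) (t : nat) :
  (0 < t)%N -> (t <= #|J|)%N -> (forall i, 0 <= a i) -> (forall i, 0 <= b i) ->
  0 <= M -> 0 <= x -> 0 <= y ->
  x ^+ t <= M * \prod_(i in J) a i -> y ^+ t <= M * \prod_(i in J) b i ->
  (x + y) ^+ t <= M * \prod_(i in J) (a i + b i).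
Proof.
move=> t0 tJ a0 b0 M0 x0 y0 hx hy.
have Qge0 : 0 <= M * \prod_(i in J) (a i + b i).
  by rewrite mulr_ge0 // prodr_ge0 // => i _; rewrite addr_ge0.
case: (boolP [exists i in J, a i + b i == 0]).
  case/exists_inP => i iJ; rewrite paddr_eq0 // => /andP[/eqP ai /eqP bi].
  have pa : \prod_(j in J) a j = 0 by rewrite (bigD1 i) //= ai mul0r.
  have pb : \prod_(j in J) b j = 0 by rewrite (bigD1 i) //= bi mul0r.
  move: hx hy; rewrite pa pb mulr0 => hx hy.
  have : x ^+ t == 0 by rewrite eq_le hx exprn_ge0.
  have : y ^+ t == 0 by rewrite eq_le hy exprn_ge0.
  rewrite !expf_eq0 t0 /= => /eqP -> /eqP ->.
  by rewrite addr0 expr0n (_ : (t == 0)%N = false) //; case: (t) t0.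
rewrite negb_exists_in => /forall_inP cpos.
have cp : forall i, i \in J -> 0 < a i + b i.
  by move=> i iJ; rewrite lt0r cpos // addr_ge0.
set k := #|J|.
have k0 : (0 < k)%N by apply: leq_trans tJ.
set Q := M * \prod_(i in J) (a i + b i).
set rho := fun i => a i / (a i + b i).
set sig := fun i => b i / (a i + b i).
set al := (\sum_(i in J) rho i) / k%:R.
set be := (\sum_(i in J) sig i) / k%:R.
have kR : k%:R != 0 :> R by rewrite pnatr_eq0 -lt0n.
have rho0 : forall i, 0 <= rho i by move=> i; rewrite divr_ge0 // addr_ge0.
have sig0 : forall i, 0 <= sig i by move=> i; rewrite divr_ge0 // addr_ge0.
have al0 : 0 <= al by rewrite divr_ge0 // sumr_ge0.
have be0 : 0 <= be by rewrite divr_ge0 // sumr_ge0.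
have albe : al + be = 1.
  rewrite /al /be -mulrDl -big_split /=.
  rewrite (eq_bigr (fun _ => 1)) ?sumr_const ?mulfV //.
  by move=> i iJ; rewrite /rho /sig -mulrDl mulfV // cpos.
have al1 : al <= 1 by rewrite -albe lerDl.
have be1 : be <= 1 by rewrite -albe lerDr.
have pa : \prod_(i in J) a i = \prod_(i in J) (a i + b i) * \prod_(i in J) rho i.
  rewrite -big_split /=; apply: eq_bigr => i iJ.
  by rewrite /rho mulrC divfK // cpos.
have pb : \prod_(i in J) b i = \prod_(i in J) (a i + b i) * \prod_(i in J) sig i.
  rewrite -big_split /=; apply: eq_bigr => i iJ.
  by rewrite /sig mulrC divfK // cpos.
have hx' : x ^+ t <= Q * al ^+ t.
  apply: (le_trans hx); rewrite pa mulrA ler_wpM2l //.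
  apply: le_trans (leif_AGM _).1 _; first by move=> i _; exact: rho0.
  exact: ler_wiXn2l.
have hy' : y ^+ t <= Q * be ^+ t.
  apply: (le_trans hy); rewrite pb mulrA ler_wpM2l //.
  apply: le_trans (leif_AGM _).1 _; first by move=> i _; exact: sig0.
  exact: ler_wiXn2l.
rewrite leNgt; apply/negP => hQ.
have xy0 : 0 <= x + y by rewrite addr_ge0.
have [h1 h1'] := helper t0 x0 xy0 al0 hx' hQ.
have [h2 h2'] := helper t0 y0 xy0 be0 hy' hQ.
have : x + y < (x + y) * al + (x + y) * be.
  have [alp|] := ltP 0 al.
    by apply: ltr_leD => //; apply: h1'.
  move=> al0'; have alz : al = 0 by apply/eqP; rewrite eq_le al0' al0.
  have bep : 0 < be by rewrite (_ : be = 1) ?ltr01 // -albe alz add0r.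
  by apply: ler_ltD => //; apply: h2'.
by rewrite -mulrDr albe mulr1 ltxx.
Qed.

Lemma combine (I : finType) (P J : {pred I}) (a b m : I -> nat) (x y t : nat) :
  (0 < t)%N -> (t <= #|[predI P & J]|)%N ->
  (forall i, i \in P -> i \in J -> (a i + b i <= m i)%N) ->
  (forall i, i \in P -> i \notin J -> (a i <= m i)%N /\ (b i <= m i)%N) ->
  (x ^ t <= \prod_(i in P) a i)%N -> (y ^ t <= \prod_(i in P) b i)%N ->
  ((x + y) ^ t <= \prod_(i in P) m i)%N.
Proof.
move=> t0 tJ hJ hK hx hy.
pose R := rat.
have split_prod : forall f : I -> nat, (\prod_(i in P) f i)%:R =
   (\prod_(i in [predI P & [predC J]]) (f i)%:R) * \prod_(i in [predI P & J]) (f i)%:R :> R.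
  move=> f; rewrite natr_prod (bigID (fun i => i \in J)) /= mulrC.
  congr (_ * _); apply: eq_bigl => i; by rewrite !inE.
rewrite -(ler_nat R) natrX natrD split_prod.
have Mle : \prod_(i in [predI P & [predC J]]) (m i)%:R >= 0 :> R by apply: prodr_ge0.
apply: (le_trans (@key R I [predI P & J] (fun i => (a i)%:R) (fun i => (b i)%:R)
   (\prod_(i in [predI P & [predC J]]) (m i)%:R) x%:R y%:R t t0 tJ _ _ Mle _ _ _ _)) => //.
- rewrite -natrX; apply: le_trans (_ : (\prod_(i in P) a i)%:R <= _).
    by rewrite ler_nat.
  rewrite split_prod ler_wpM2r //; first exact: prodr_ge0.
  apply: ler_prod => i; rewrite !inE => /andP[iP iJ].
  by rewrite ler0n ler_nat; case: (hK i iP iJ).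
- rewrite -natrX; apply: le_trans (_ : (\prod_(i in P) b i)%:R <= _).
    by rewrite ler_nat.
  rewrite split_prod ler_wpM2r //; first exact: prodr_ge0.
  apply: ler_prod => i; rewrite !inE => /andP[iP iJ].
  by rewrite ler0n ler_nat; case: (hK i iP iJ).
- rewrite ler_wpM2l //; last apply: ler_prod => i; rewrite !inE => /andP[iP iJ].
  by rewrite -natrD ler0n ler_nat hJ.
Qed.

End KeyIneq.

Lemma shearer (V I : finType) (S : I -> {set V}) (P : {pred I}) (t : nat) :
  0 < t -> forall (U : {set V}) (F : {set {set V}}),
  (forall A, A \in F -> A \subset U) ->
  (forall v, v \in U -> t <= #|[set i in P | v \in S i]|) ->
  #|F| ^ t <= \prod_(i in P) #|[set A :&: S i | A in F]|.
Proof.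
move=> t0 U; move: {2}#|U| (erefl #|U|) => k; elim: k U => [|k IH] U hU F FU cov.
  case: (set_0Vmem F) => [->|[A0 A0F]]; first by rewrite cards0 exp0n.
  have F1 : #|F| <= 1.
    rewrite -(cards1 (set0 : {set V})); apply: subset_leq_card; apply/subsetP => A AF.
    have := FU A AF; move/eqP: hU; rewrite cards_eq0 => /eqP ->.
    by rewrite subset0 inE.
  apply: (leq_trans (_ : _ <= 1)).
    by rewrite -(exp1n t) leq_exp2r.
  rewrite prodn_gt0 // => i; rewrite card_gt0; apply/set0Pn.
  by exists (A0 :&: S i); apply: imset_f.
have [v vU] : exists v, v \in U.
  by apply/card_gt0P; rewrite hU.
set U' := U :\ v.
have hU' : #|U'| = k by rewrite /U' (cardsD1 v U) vU in hU; case: hU.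
set Fv := [set A : {set V} | v \in A].
set F0 := F :\: Fv.
set F1 := [set A :\ v | A in F :&: Fv].
have cardF : #|F| = #|F0| + #|F1|.
  rewrite -(cardsID Fv F) addnC /F1 card_in_imset //.
  move=> A B; rewrite !inE => /andP[_ vA] /andP[_ vB] e.
  by rewrite -(setD1K vA) -(setD1K vB) e.
have cov' : forall w, w \in U' -> t <= #|[set i in P | w \in S i]|.
  by move=> w; rewrite inE => /andP[_ /cov].
have h0 := IH U' hU' F0 _ cov'.
have h1 := IH U' hU' F1 _ cov'.
rewrite cardF.
apply: (@combine I P [pred i | v \in S i]
  (fun i => #|[set A :&: S i | A in F0]|)
  (fun i => #|[set A :&: S i | A in F1]|) (fun i => #|[set A :&: S i | A in F]|)
   _ _ t t0 _ _ _ (h0 _) (h1 _)).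
- apply: (leq_trans (cov v vU)); apply: subset_leq_card; apply/subsetP => i.
  by rewrite !inE.
- move=> i iP viS; have {}viS : v \in S i by [].
  set p0 := [set A :&: S i | A in F0].
  set p1 := [set A :&: S i | A in F1].
  have nv1 : forall B, B \in p1 -> v \notin B.
    by move=> B /imsetP[A /imsetP[A' _ ->] ->]; rewrite !inE eqxx.
  have inj : {in p1 &, injective (fun B => v |: B)}.
    move=> B C B1 C1 /= e.
    by rewrite -(setU1K (nv1 _ B1)) -(setU1K (nv1 _ C1)) e.
  rewrite /= -(card_in_imset inj).
  have disj : p0 :&: [set v |: B | B in p1] = set0.
    apply/setP => B; rewrite !inE; apply/negbTE/negP => /andP[/imsetP[A AF ->]].
    move=> /imsetP[C _ e].
    have : v \in A :&: S i by rewrite e !inE eqxx.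
    by move: AF; rewrite !inE => /andP[vA _] /andP[vA' _]; rewrite vA' in vA.
  rewrite -[#|p0| + _](subn0) -(cards0 {set V}) -disj -cardsU /=.
  apply: subset_leq_card; apply/subsetP => B; rewrite inE => /orP[].
    move=> /imsetP[A AF ->]; apply: imset_f.
    by move: AF; rewrite !inE => /andP[].
  move=> /imsetP[C /imsetP[A' /imsetP[A AF ->] ->] ->].
  have -> : v |: ((A :\ v) :&: S i) = A :&: S i.
    move: AF; rewrite !inE => /andP[_ vA].
    apply/setP => w; rewrite !inE; case: eqP => [->|] //=.
    by rewrite vA viS.
  by apply: imset_f; move: AF; rewrite !inE => /andP[].
- move=> i iP viS; have {}viS : v \notin S i by [].
  split; apply: subset_leq_card; apply/subsetP => B /imsetP[A AF ->].
    by apply: imset_f; move: AF; rewrite !inE => /andP[].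
  move: AF => /imsetP[A' A'F ->].
  have -> : (A' :\ v) :&: S i = A' :&: S i.
    apply/setP => w; rewrite !inE; case: eqP => // ->.
    by rewrite (negbTE viS) !andbF.
  by apply: imset_f; move: A'F; rewrite !inE => /andP[].
- move=> A; rewrite !inE => /andP[vA AF].
  by rewrite /U' subsetD1 FU.
- move=> B /imsetP[A AF ->]; rewrite /U'; apply: setSD.
  by apply: FU; move: AF; rewrite !inE => /andP[].
Qed.

Lemma indep_small n (B : {set {set 'I_n}}) r (D : {set 'I_n}) :
  paving B r -> #|D| < r -> independent B D.
Proof.
move=> pav Dr; apply: contraT => dep.
pose P := fun C : {set 'I_n} => ~~ independent B C && (C \subset D).
have PD : P D by rewrite /P dep subxx.
case: (@arg_minnP _ D P (fun C : {set 'I_n} => #|C|) PD) => C /andP[depC CD] minC.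
have circ : circuit B C.
  rewrite /circuit depC /=; apply/forallP => E; apply/implyP => EC.
  apply: contraT => depE.
  have := minC E; rewrite /P depE (subset_trans (proper_sub EC) CD) => /(_ isT).
  by rewrite leqNgt proper_card.
have := (forallP pav) C; rewrite circ /= => rC.
by have := leq_ltn_trans (leq_trans rC (subset_leq_card CD)) Dr; rewrite ltnn.
Qed.

Lemma eqcard (T : finType) (Z W : {set T}) : Z \subset W -> #|W| <= #|Z| -> Z = W.
Proof. by move=> ZW WZ; apply/eqP; rewrite eqEcard ZW WZ. Qed.

Lemma addT (T : finType) (y : T) (A Z : {set T}) r :
  A \subset Z -> #|A| = r.-1 -> 0 < r -> #|Z| = r -> y \in Z -> y \notin A -> y |: A = Z.
Proof.
move=> AZ cA r0 cZ yZ yA; apply: eqcard.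
  by rewrite subUset sub1set yZ AZ.
by rewrite cardsU1 yA cA cZ; case: (r) r0.
Qed.

Lemma code_prop n (B : {set {set 'I_n}}) r (X Y T : {set 'I_n}) :
  0 < r -> sparse_paving B r -> #|X| = r -> #|Y| = r -> X \notin B -> Y \notin B ->
  T \subset X -> T \subset Y -> #|T| = r.-1 -> X = Y.
Proof.
move=> r0 /and4P[mat rk pav dpav] cX cY XB YB TX TY cT.
apply/eqP; apply: contraT => /negP neXY.
have : independent B T by apply: indep_small pav _; rewrite cT ltn_predL.
case/exists_inP => b1 b1B Tb1.
have cb1 : #|b1| = r by apply/eqP; exact: (forall_inP rk).
have : T \proper b1 by rewrite properEcard Tb1 cT cb1 ltn_predL.
case/properP => _ [c cb1' cT'].
have b1e : c |: T = b1 by apply: addT cT r0 cb1 cb1' cT'.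
have cX' : c \notin X.
  apply/negP => cX'; move: XB; rewrite -(addT TX cT r0 cX cX' cT') b1e.
  by rewrite b1B.
have cY' : c \notin Y.
  apply/negP => cY'; move: YB; rewrite -(addT TY cT r0 cY cY' cT') b1e.
  by rewrite b1B.
have XYc : #|X| < #|X :|: Y|.
  rewrite ltn_neqAle subset_leq_card ?subsetUl // andbT.
  apply/negP => /eqP e; apply: neXY; apply/eqP.
  have : X = X :|: Y by apply: eqcard; rewrite ?subsetUl // e.
  move=> XU; apply/eqP; rewrite eq_sym; apply/eqP; apply: (eqcard (Z:=Y) (W:=X)); last by rewrite cX cY.
  by rewrite XU subsetUr.
have cD : #|~: (X :|: Y)| < n - r.
  have := cardsC (X :|: Y); rewrite card_ord => e.
  have := max_card (X :|: Y); rewrite card_ord; move: XYc; rewrite cX.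
  move: #|X :|: Y| #|~: (X :|: Y)| e => a b <- ra _.
  by rewrite -addnBAC ?(ltnW ra) // -[X in X < _]add0n ltn_add2r subn_gt0.
have := indep_small dpav cD.
case/exists_inP => b0 /imsetP[b' b'B ->]; rewrite setCS => b'XY.
have cin : c \in b1 :\: b'.
  rewrite inE cb1' andbT; apply/negP => /(subsetP b'XY); rewrite inE.
  by rewrite (negbTE cX') (negbTE cY').
move/andP: mat => [_ /forall_inP /(_ b1 b1B) /forall_inP /(_ b' b'B)].
move=> /forall_inP /(_ c cin) /exists_inP [y]; rewrite inE => /andP[yb1 yb'].
have -> : b1 :\ c = T by rewrite -b1e setU1K.
have yT : y \notin T by apply: contra yb1; apply: (subsetP Tb1).
have := subsetP b'XY y yb'; rewrite inE => /orP[yX|yY].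
  by rewrite (addT TX cT r0 cX yX yT) (negbTE XB).
by rewrite (addT TY cT r0 cY yY yT) (negbTE YB).
Qed.

Lemma notrank n (B : {set {set 'I_n}}) r (X : {set 'I_n}) : has_rank B r -> #|X| != r -> X \notin B.
Proof.
move=> rk cX; apply/negP => XB.
by move: cX; rewrite (eqP (forall_inP rk X XB)) eqxx.
Qed.

Lemma count_bound n r : 0 < r -> r <= n -> s n r ^ r <= (n - r + 2) ^ 'C(n, r.-1).
Proof.
move=> r0 rn.
pose phi := fun B : {set {set 'I_n}} => [set X : {set 'I_n} | (#|X| == r) && (X \notin B)].
pose SP := [set B : {set {set 'I_n}} | sparse_paving B r].
pose G := phi @: SP.
pose S := fun T : {set 'I_n} => [set X : {set 'I_n} | (#|X| == r) && (T \subset X)].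
pose P := [set T : {set 'I_n} | #|T| == r.-1].
pose U := [set X : {set 'I_n} | #|X| == r].
have sG : s n r = #|G|.
  rewrite /s -/SP /G card_in_imset //.
  move=> B1 B2; rewrite !inE => /and4P[_ rk1 _ _] /and4P[_ rk2 _ _] e.
  apply/setP => X; case: (boolP (#|X| == r)) => cX.
    have := congr1 (fun F : {set {set 'I_n}} => X \in F) e; rewrite /phi !inE cX /=.
    by move/negb_inj.
  by rewrite (negbTE (notrank rk1 cX)) (negbTE (notrank rk2 cX)).
have FU : forall A, A \in G -> A \subset U.
  move=> A /imsetP[B _ ->]; apply/subsetP => X; rewrite !inE => /andP[].
  by [].
have cov : forall X, X \in U -> r <= #|[set i in P | X \in S i]|.
  move=> X; rewrite inE => /eqP cX.
  have inj : {in X &, injective (fun x => X :\ x)}.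
    move=> x y xX yX /= e; apply/eqP; apply: contraT => nxy.
    have : x \in X :\ y by rewrite !inE nxy xX.
    by rewrite -e !inE eqxx.
  rewrite -{1}cX -(card_in_imset inj); apply: subset_leq_card.
  apply/subsetP => T /imsetP[x xX ->]; rewrite !inE.
  rewrite cX eqxx subsetDl andbT.
  by move: (cardsD1 x X); rewrite xX cX andbT => ->.
have fac : forall T, T \in P -> #|[set A :&: S T | A in G]| <= n - r + 2.
  move=> T; rewrite inE => /eqP cT.
  have sub : [set A :&: S T | A in G] \subset set0 |: [set [set X] | X in S T].
    apply/subsetP => Z /imsetP[A /imsetP[B BSP ->] ->].
    case: (set_0Vmem (phi B :&: S T)) => [->|[X XA]]; first by rewrite !inE eqxx.
    rewrite in_setU1; apply/orP; right.
    have XS : X \in S T by move: XA; rewrite inE => /andP[].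
    have -> : phi B :&: S T = [set X].
      apply/setP => Y; rewrite in_set1; apply/idP/eqP => [YA|->//].
      move: XA YA BSP; rewrite !inE => /andP[/andP[cX XB] /andP[_ TX]].
      move=> /andP[/andP[cY YB] /andP[_ TY]] sp.
      symmetry; apply: (code_prop r0 sp (eqP cX) (eqP cY) XB YB TX TY cT).
    exact: imset_f.
  apply: (leq_trans (subset_leq_card sub)); rewrite cardsU1.
  apply: (@leq_trans (1 + #|S T|)).
    by apply: leq_add; [case: (_ \notin _) | exact: leq_imset_card].
  have : #|S T| <= #|~: T|.
    have : S T \subset [set c |: T | c in ~: T].
      apply/subsetP => X; rewrite inE => /andP[/eqP cX TX].
      have : T \proper X by rewrite properEcard TX cT cX ltn_predL.
      case/properP => _ [c cX' cT'].
      rewrite -(addT TX cT r0 cX cX' cT'); apply: imset_f; by rewrite inE.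
    by move=> h; apply: (leq_trans (subset_leq_card h)); apply: leq_imset_card.
  have := cardsC T; rewrite card_ord cT.
  move: #|S T| #|~: T| => a b; lia.
rewrite sG.
apply: (leq_trans (@shearer _ _ S (mem P) r r0 U G FU cov)).
apply: (@leq_trans (\prod_(i in P) (n - r + 2))).
  by apply: leq_prod => i iP; apply: fac.
rewrite prod_nat_const.
suff -> : #|P| = 'C(n, r.-1) by [].
by rewrite /P card_draws card_ord.
Qed.

From Stdlib Require Import Reals Lra.

Lemma INR_expn a k : INR (expn a k) = (INR a ^ k)%R.
Proof. elim: k => [|k IH]; first by []. by rewrite expnS -multE mult_INR IH. Qed.

Lemma s_le1 n : s n 0 <= 1.
Proof.
apply/card_le1_eqP => B1 B2; rewrite !inE => /and4P[m1 rk1 _ _] /and4P[m2 rk2 _ _].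
have has0 : forall B : {set {set 'I_n}}, is_matroid B -> has_rank B 0 -> set0 \in B.
  move=> B /andP[/set0Pn [b bB] _] rk.
  have := forall_inP rk b bB; rewrite cards_eq0 => /eqP b0.
  by rewrite -b0.
apply/setP => X; case: (boolP (#|X| == 0)) => cX.
  by move: cX; rewrite cards_eq0 => /eqP ->; rewrite !has0.
by rewrite (negbTE (notrank rk1 cX)) (negbTE (notrank rk2 cX)).
Qed.

Theorem theorem1p2 (n r : nat) (hrn : (r <= n)%N) :
  (log2 (INR (s n r)) <=
   / INR (n - r + 1) * INR 'C(n, r) * log2 (INR (n - r + 2)))%R.
Proof.
have ln_le : forall x y, (0 < x)%R -> (x <= y)%R -> (ln x <= ln y)%R.
  move=> x y x0 xy; case: (Rle_lt_or_eq_dec x y xy) => [h|<-]; last by apply: Rle_refl.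
  by apply: Rlt_le; apply: ln_increasing.
have ln2 : (0 < ln 2)%R by rewrite -ln_1; apply: ln_increasing; lra.
set L := ln (INR (n - r + 2)).
have L0 : (0 < L)%R.
  rewrite /L -ln_1; apply: ln_increasing; first lra.
  rewrite -plusE plus_INR /=; have := pos_INR (n - r); lra.
set d := INR (n - r + 1).
have d0 : (0 < d)%R by rewrite /d -plusE plus_INR /=; have := pos_INR (n - r); lra.
set e := INR 'C(n, r).
have e0 : (0 <= e)%R by apply: pos_INR.
rewrite /log2 -/L.
replace (/ d * e * (L / ln 2))%R with ((/ d * e * L) * / ln 2)%R by (rewrite /Rdiv; ring).
rewrite /Rdiv. apply: Rmult_le_compat_r; first by apply: Rlt_le; apply: Rinv_0_lt_compat.
have rhs0 : (0 <= / d * e * L)%R.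
  apply: Rmult_le_pos; last lra.
  by apply: Rmult_le_pos => //; apply: Rlt_le; apply: Rinv_0_lt_compat.
case: (posnP (s n r)) => [->|sp].
  rewrite /ln; case: Rlt_dec => [h|_]; [by case: (Rlt_irrefl _ h) | exact: rhs0].
case: (posnP r) => [r0|rp].
  have : s n r = 1 by apply/eqP; rewrite eqn_leq sp andbT r0 s_le1.
  by move=> ->; rewrite /= ln_1.
have cb := count_bound rp hrn.
have S0 : (0 < INR (s n r))%R by apply: lt_0_INR; apply/ltP.
have : (INR (s n r) ^ r <= INR (n - r + 2) ^ 'C(n, r.-1))%R.
  by rewrite -!INR_expn; apply: le_INR; apply/leP.
move/(ln_le _ _ (pow_lt _ _ S0)); rewrite !ln_pow //; last first.
  rewrite -plusE plus_INR /=; have := pos_INR (n - r); lra.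
rewrite -/L => key.
set a := INR r in key *; set c := INR 'C(n, r.-1) in key *.
have a0 : (0 < a)%R by apply: lt_0_INR; apply/ltP.
have Hae : (a * e = d * c)%R.
  rewrite /a /e /d /c -!mult_INR multE; congr INR.
  case: (r) rp hrn => [//|m] _ hm; rewrite mul_bin_left; congr (_ * _).
  lia.
have He : e = (d * c / a)%R by rewrite -Hae; field; lra.
rewrite He.
replace (/ d * (d * c / a) * L)%R with (c * L / a)%R by (field; lra).
apply: (Rmult_le_reg_l a) => //.
replace (a * (c * L / a))%R with (c * L)%R by (field; lra).
exact: key.
Qed.
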